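(* Let $R$ be a commutative Noetherian ring with unity such that $\Gamma_E(R)$ is a fan graph with at least four vertices. Then: (1) $R$ has exactly one associated prime $\mathfrak p$, i.e. $\operatorname{Ass}(R)=\{\mathfrak p\}$; (2) $\mathfrak p^3=0$; (3) the characteristic of $R$ is $2$, $4$, or $8$.
   Context: For $x,y\in R$ write $x\sim y$ iff $\operatorname{ann}(x)=\operatorname{ann}(y)$; $[x]$ denotes the equivalence class of $x$. Let $Z^*(R)$ be the set of nonzero zero divisors of $R$. The graph $\Gamma_E(R)$ is the simple graph whose vertices are the classes $[x]$ with $x\in Z^*(R)$, two distinct vertices $[x],[y]$ being adjacent iff $xy=0$. A fan graph is a complete bipartite graph $K_{n,1}$ with $n\in\mathbb N\cup\{\infty\}$ (one central vertex adjacent to all others, and no other edges). $\operatorname{Ass}(R)$ is the set of prime ideals of the form $\operatorname{ann}(y)$, $y\in R$. *)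

(* Defs.v *)
From mathcomp Require Import all_boot all_order all_algebra.
Set Implicit Arguments. Unset Strict Implicit. Unset Printing Implicit Defensive.
Import GRing.Theory.
Local Open Scope ring_scope.

Section Defs.
Variable R : comPzRingType.

Definition seteq (A B : R -> Prop) : Prop := forall z, A z <-> B z.

Definition ann (x : R) : R -> Prop := fun z => x * z = 0.

Definition ann_equiv (x y : R) : Prop := seteq (ann x) (ann y).

Definition nz_zero_divisor (x : R) : Prop := x <> 0 /\ exists y : R, y <> 0 /\ x * y = 0.

(* Gamma_E(R): vertices are ~-classes [x] of elements x in Z*(R); distinct
   classes [x],[y] are adjacent iff x y = 0 (independent of representatives).
   We work with representatives. *)
Definition GammaE_adj (x y : R) : Prop :=
  nz_zero_divisor x /\ nz_zero_divisor y /\ ~ ann_equiv x y /\ x * y = 0.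

(* Gamma_E(R) is a fan graph K_{n,1} (n finite or infinite): there is a
   central vertex [c] such that two distinct vertices are adjacent iff one of
   them is [c]. *)
Definition GammaE_is_fan : Prop :=
  exists c : R, nz_zero_divisor c /\
    forall x y : R, nz_zero_divisor x -> nz_zero_divisor y -> ~ ann_equiv x y ->
      (GammaE_adj x y <-> (ann_equiv x c \/ ann_equiv y c)).

Definition GammaE_at_least_4_vertices : Prop :=
  exists x1 x2 x3 x4 : R,
    [/\ nz_zero_divisor x1, nz_zero_divisor x2, nz_zero_divisor x3 & nz_zero_divisor x4] /\
    (~ ann_equiv x1 x2 /\ ~ ann_equiv x1 x3 /\ ~ ann_equiv x1 x4 /\
     ~ ann_equiv x2 x3 /\ ~ ann_equiv x2 x4 /\ ~ ann_equiv x3 x4).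

Definition is_ideal (I : R -> Prop) : Prop :=
  [/\ I 0, (forall a b, I a -> I b -> I (a + b)) & (forall r a, I a -> I (r * a))].

Definition is_prime_ideal (P : R -> Prop) : Prop :=
  [/\ is_ideal P, ~ P 1 & (forall a b, P (a * b) -> P a \/ P b)].

Definition noetherian : Prop :=
  forall I : nat -> R -> Prop, (forall n, is_ideal (I n)) ->
    (forall n x, I n x -> I n.+1 x) ->
    exists N : nat, forall n, (N <= n)%N -> forall x, I n x -> I N x.

Definition is_associated_prime (P : R -> Prop) : Prop :=
  is_prime_ideal P /\ exists y : R, seteq P (ann y).

Definition ideal_mul (I J : R -> Prop) : R -> Prop :=
  fun x => exists s : seq (R * R),
    (forall ab, ab \in s -> I ab.1 /\ J ab.2) /\
    x = \sum_(ab <- s) (ab.1 * ab.2).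

Definition zero_ideal : R -> Prop := fun x => x = 0.

(* characteristic of R is n: the kernel of Z -> R is nZ (n = 0 for char 0) *)
Definition char_is (n : nat) : Prop :=
  forall m : nat, (m%:R : R) = 0 <-> (n %| m)%N.

End Defs.

(* Main.v *)
Require Import Defs.
From mathcomp Require Import all_boot all_order all_algebra.
From mathcomp Require Import ring.
From Stdlib Require Import Classical_Prop IndefiniteDescription.
Set Implicit Arguments. Unset Strict Implicit.
Import GRing.Theory.
Local Open Scope ring_scope.

Lemma eqv_refl (R : comPzRingType) (x : R) : ann_equiv x x.
Proof. by move=> z. Qed.

Lemma eqv_sym (R : comPzRingType) (x y : R) : ann_equiv x y -> ann_equiv y x.
Proof. by move=> H z; split; move/(H z). Qed.

Lemma eqv_trans (R : comPzRingType) (x y w : R) :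
  ann_equiv x y -> ann_equiv y w -> ann_equiv x w.
Proof. by move=> H1 H2 z; split => H; [apply/(H2 z)/(H1 z) | apply/(H1 z)/(H2 z)]. Qed.

Lemma neq_c (R : comPzRingType) (x y c : R) :
  ann_equiv x c -> ~ ann_equiv x y -> ~ ann_equiv y c.
Proof. move=> H1 H2 H3; apply: H2; exact: eqv_trans H1 (eqv_sym H3). Qed.

Lemma ann_ideal (R : comPzRingType) (w : R) : is_ideal (ann w).
Proof.
split; rewrite /ann.
- by rewrite mulr0.
- by move=> a b Ha Hb; rewrite mulrDr Ha Hb addr0.
- by move=> r a Ha; rewrite mulrCA Ha mulr0.
Qed.

Lemma natr_mod (R : comPzRingType) (n m : nat) :
  (n%:R : R) = 0 -> (m%:R : R) = (m %% n)%:R.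
Proof. by move=> H; rewrite {1}(divn_eq m n) natrD natrM H mulr0 add0r. Qed.

Lemma char_small (R : comPzRingType) (n : nat) : (0 < n)%N -> (n%:R : R) = 0 ->
  (forall r, (r < n)%N -> (r%:R : R) = 0 -> r = 0%N) -> char_is R n.
Proof.
move=> Hn H0 Hs m; split.
- move=> Hm; rewrite /dvdn; apply/eqP; apply: Hs; first by rewrite ltn_mod.
  by rewrite -(natr_mod m H0).
- by rewrite /dvdn => /eqP Hm; rewrite (natr_mod m H0) Hm.
Qed.

Lemma char_of_8 (R : comPzRingType) : (1 : R) <> 0 -> (8%:R : R) = 0 ->
  char_is R 2 \/ char_is R 4 \/ char_is R 8.
Proof.
move=> H1 H8.
have K : forall n r k, (n%:R : R) = 0 -> (r%:R : R) = 0 -> ((r * k) %% n = 1)%N -> False.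
  move=> n r k Hn Hr Hrk; apply: H1.
  by rewrite -(mulr1n (1 : R)) -Hrk -(natr_mod _ Hn) natrM Hr mul0r.
case: (classic ((2%:R : R) = 0)) => H2.
  left; apply: char_small => // r; case: r => [|[|r]] //.
case: (classic ((4%:R : R) = 0)) => H4.
  right; left; apply: char_small => // r.
  case: r => [|[|[|[|r]]]] // _.
  by move=> H3; exfalso; apply: (K 4%N 3%N 3%N).
right; right; apply: char_small => // r.
case: r => [|[|[|[|[|[|[|[|r]]]]]]]] // _.
- by move=> H3; exfalso; apply: (K 8%N 3%N 3%N).
- by move=> H5; exfalso; apply: (K 8%N 5%N 5%N).
- move=> H6; exfalso; apply: H2.
  by rewrite -[2%N]/((6 * 3) %% 8)%N -(natr_mod _ H8) natrM H6 mul0r.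
- by move=> H7; exfalso; apply: (K 8%N 7%N 7%N).
Qed.

Theorem proposition2p4 (R : comPzRingType) :
  noetherian R -> GammaE_is_fan R -> GammaE_at_least_4_vertices R ->
  exists p : R -> Prop,
    [/\ is_associated_prime p /\
          (forall q, is_associated_prime q -> seteq q p),
        seteq (ideal_mul p (ideal_mul p p)) (@zero_ideal R)
      & char_is R 2 \/ char_is R 4 \/ char_is R 8].
Proof.
move=> Hnoeth [c [Hc Hfan]]
  [x1 [x2 [x3 [x4 [[N1 N2 N3 N4] [E12 [E13 [E14 [E23 [E24 E34]]]]]]]]]].
have Hc0 : c <> 0 by case: Hc.
have F0 : forall x, nz_zero_divisor x -> ~ ann_equiv x c -> x * c = 0.
  move=> x Nx Ex; have [_ H] := Hfan x c Nx Hc Ex.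
  by case: (H (or_intror (eqv_refl c))) => _ [_ [_ ->]].
have F0' : forall x, nz_zero_divisor x -> ~ ann_equiv x c -> c * x = 0.
  by move=> x Nx Ex; rewrite mulrC; apply: F0.
have F1 : forall x y, nz_zero_divisor x -> nz_zero_divisor y ->
    ~ ann_equiv x c -> ~ ann_equiv y c -> x * y = 0 -> ann_equiv x y.
  move=> x y Nx Ny Ex Ey Hxy; apply: NNPP => Exy.
  have [H _] := Hfan x y Nx Ny Exy.
  by case: (H (conj Nx (conj Ny (conj Exy Hxy)))).
have Leaves3 : exists a b d,
    [/\ nz_zero_divisor a /\ ~ ann_equiv a c, nz_zero_divisor b /\ ~ ann_equiv b c,
        nz_zero_divisor d /\ ~ ann_equiv d c &
        ~ ann_equiv a b /\ ~ ann_equiv a d /\ ~ ann_equiv b d].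
  case: (classic (ann_equiv x1 c)) => C1.
    exists x2, x3, x4; split => //.
    - by split => //; apply: neq_c C1 E12.
    - by split => //; apply: neq_c C1 E13.
    - by split => //; apply: neq_c C1 E14.
  case: (classic (ann_equiv x2 c)) => C2.
    exists x1, x3, x4; split => //.
    - by split => //; apply: neq_c C2 E23.
    - by split => //; apply: neq_c C2 E24.
  case: (classic (ann_equiv x3 c)) => C3.
    exists x1, x2, x4; split => //.
    by split => //; apply: neq_c C3 E34.
  by exists x1, x2, x3; split.
have [a0 [b0 [d0 [[Na0 Ea0] [Nb0 Eb0] [Nd0 Ed0] [Eab0 [Ead0 Ebd0]]]]]] := Leaves3.
have StepA : forall y, nz_zero_divisor y -> ~ ann_equiv y c ->
    (forall a b, y * (a * b) = 0 -> y * a = 0 \/ y * b = 0) -> False.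
  move=> y Ny Ey Hpr.
  have core : forall x x', nz_zero_divisor x -> ~ ann_equiv x c ->
      nz_zero_divisor x' -> ~ ann_equiv x' c ->
      ~ ann_equiv x y -> forall w, x * w = 0 -> x' * w = 0.
    move=> x x' Nx Ex Nx' Ex' Exy w Hw.
    case: (classic (w = 0)) => [->|Hw0]; first by rewrite mulr0.
    have Hyx : y * x <> 0.
      move=> H; apply: Exy; apply: eqv_sym; exact: F1 _ _ Ny Nx Ey Ex H.
    have : y * (x * w) = 0 by rewrite Hw mulr0.
    case/Hpr => // Hyw.
    have Nw : nz_zero_divisor w.
      split => //; exists x; split; first by case: Nx.
      by rewrite mulrC.
    case: (classic (ann_equiv w c)) => Ew.
      rewrite mulrC; apply/(Ew x'); exact: F0' _ Nx' Ex'.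
    have Hwy : w * y = 0 by rewrite mulrC.
    have Ewy := F1 w y Nw Ny Ew Ey Hwy.
    by exfalso; apply: Hyx; apply: (proj1 (Ewy x)); rewrite /ann mulrC.
  have two : forall x x', nz_zero_divisor x -> ~ ann_equiv x c ->
      nz_zero_divisor x' -> ~ ann_equiv x' c ->
      ~ ann_equiv x y -> ~ ann_equiv x' y -> ~ ann_equiv x x' -> False.
    move=> x x' Nx Ex Nx' Ex' Exy Ex'y Exx; apply: Exx => z; split.
    - exact: core _ _ Nx Ex Nx' Ex' Exy z.
    - exact: core _ _ Nx' Ex' Nx Ex Ex'y z.
  case: (classic (ann_equiv a0 y)) => Ay.
    apply: (two b0 d0) => // H.
    + by apply: Eab0; exact: eqv_trans Ay (eqv_sym H).
    + by apply: Ead0; exact: eqv_trans Ay (eqv_sym H).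
  case: (classic (ann_equiv b0 y)) => By.
    apply: (two a0 d0) => // H.
    by apply: Ebd0; exact: eqv_trans By (eqv_sym H).
  exact: (two a0 b0).

(* Step B: maximal annihilators via ACC *)
have StepB : forall v : R, v <> 0 -> exists w, [/\ w <> 0,
    (forall z, v * z = 0 -> w * z = 0) &
    (forall a b, w * (a * b) = 0 -> w * a = 0 \/ w * b = 0)].
  move=> v Hv; apply: NNPP => Hno.
  have Hstep : forall w : R, exists a : R,
      (w <> 0 /\ (forall z, v * z = 0 -> w * z = 0)) ->
      (w * a <> 0 /\ exists b, w * a * b = 0 /\ w * b <> 0).
    move=> w.
    case: (classic (w <> 0 /\ (forall z, v * z = 0 -> w * z = 0))) => [[Hw Hsub]|Hn];
      last by exists 0 => /Hn.
    apply: NNPP => Hna; apply: Hno; exists w; split => // a b Hab.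
    apply: NNPP => Hor; apply: Hna; exists a => _; split.
    - by move=> Ha; apply: Hor; left.
    - exists b; split; first by rewrite -mulrA.
      by move=> Hb; apply: Hor; right.
  pose f w := proj1_sig (constructive_indefinite_description _ (Hstep w)).
  have Hf : forall w, (w <> 0 /\ (forall z, v * z = 0 -> w * z = 0)) ->
      (w * f w <> 0 /\ exists b, w * f w * b = 0 /\ w * b <> 0).
    move=> w; exact: (proj2_sig (constructive_indefinite_description _ (Hstep w))).
  pose s n := iter n (fun w => w * f w) v.
  have Hs : forall n, s n <> 0 /\ (forall z, v * z = 0 -> s n * z = 0).
    elim=> [|n [IH1 IH2]] /=; first by split.
    have [H1 _] := Hf (s n) (conj IH1 IH2); split; first exact: H1.
    by move=> z Hz; rewrite mulrAC IH2 // mul0r.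
  have [N HN] := Hnoeth (fun n => ann (s n)) (fun n => ann_ideal (s n))
    (fun n x Hx => (etrans (mulrAC (s n) (f (s n)) x) (etrans (congr1 (fun t => t * f (s n)) Hx) (mul0r _)))).
  have [_ [b [Hb1 Hb2]]] := Hf (s N) (Hs N).
  by apply: Hb2; apply: (HN N.+1 (leqnSn N) b).
have StepC : forall v : R, v <> 0 -> forall z, v * z = 0 -> c * z = 0.
  move=> v Hv z Hz; have [w [Hw Hsub Hpr]] := StepB v Hv.
  have Hwz := Hsub z Hz.
  case: (classic (z = 0)) => [->|Hz0]; first by rewrite mulr0.
  have Nw : nz_zero_divisor w by split => //; exists z.
  case: (classic (ann_equiv w c)) => [E|NE]; first exact: (proj1 (E z)).
  by exfalso; apply: (StepA w Nw NE Hpr).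
have Pprime : forall a b, c * (a * b) = 0 -> c * a = 0 \/ c * b = 0.
  move=> a b H; have [w [Hw Hsub Hpr]] := StepB c Hc0.
  by case: (Hpr a b (Hsub _ H)) => H'; [left|right]; apply: (StepC w Hw).
have Pc : c * c = 0 by apply: (StepC a0 (proj1 Na0)); apply: F0.

pose S := fun s : R => forall z, c * z = 0 -> s * z = 0.
have SofE : forall u, ann_equiv u c -> S u.
  by move=> u E z Hz; apply: (proj2 (E z)).
have S0 : S 0 by move=> z _; rewrite mul0r.
have Pcases : forall u, c * u = 0 -> S u \/ (nz_zero_divisor u /\ ~ ann_equiv u c).
  move=> u Hu; case: (classic (u = 0)) => [->|Hu0]; first by left.
  case: (classic (ann_equiv u c)) => E; first by left; apply: SofE.
  by right; split => //; split => //; exists c; split => //; rewrite mulrC.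
have Spec : forall a, nz_zero_divisor a -> ~ ann_equiv a c -> a * a <> 0 ->
    forall w, a * w = 0 -> S w.
  move=> a Na Ea Haa w Hw.
  case: (classic (w = 0)) => [->|Hw0]; first exact: S0.
  have Nw : nz_zero_divisor w.
    by split => //; exists a; split; [case: Na | rewrite mulrC].
  case: (classic (ann_equiv w c)) => Ew; first exact: SofE.
  have Eaw := F1 a w Na Nw Ea Ew Hw.
  exfalso; apply: Haa; apply: (proj2 (Eaw a)); rewrite /ann mulrC; exact: Hw.
have Spec2 : forall a b, nz_zero_divisor a -> ~ ann_equiv a c -> a * a <> 0 ->
    nz_zero_divisor b -> ~ ann_equiv b c -> b * b <> 0 -> ann_equiv a b.
  have H : forall a b, nz_zero_divisor a -> ~ ann_equiv a c -> a * a <> 0 ->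
      nz_zero_divisor b -> ~ ann_equiv b c -> forall z, a * z = 0 -> b * z = 0.
    move=> a b Na Ea Haa Nb Eb z Hz.
    by rewrite mulrC; apply: (Spec a Na Ea Haa z Hz); apply: F0'.
  move=> a b Na Ea Haa Nb Eb Hbb z; split; [exact: H | exact: H].
have Regs : exists r1 r2, [/\ nz_zero_divisor r1 /\ ~ ann_equiv r1 c /\ r1 * r1 = 0,
    nz_zero_divisor r2 /\ ~ ann_equiv r2 c /\ r2 * r2 = 0 & ~ ann_equiv r1 r2].
  case: (classic (a0 * a0 = 0)) => Ha; case: (classic (b0 * b0 = 0)) => Hb.
  - by exists a0, b0.
  - case: (classic (d0 * d0 = 0)) => Hd; first by exists a0, d0.
    by exfalso; apply: Ebd0; apply: Spec2.
  - case: (classic (d0 * d0 = 0)) => Hd; first by exists b0, d0.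
    by exfalso; apply: Ead0; apply: Spec2.
  - by exfalso; apply: Eab0; apply: Spec2.
have [r1 [r2 [[Nr1 [Er1 Hr1]] [Nr2 [Er2 Hr2]] Er12]]] := Regs.
have L1 : forall x v, nz_zero_divisor x -> ~ ann_equiv x c -> x * x = 0 ->
    nz_zero_divisor v -> ~ ann_equiv v c -> v * v = 0 -> S (x * v).
  move=> x v Nx Ex Hx Nv Ev Hv.
  have Hc1 : c * (x * v) = 0 by rewrite mulrA F0' // mul0r.
  case: (Pcases _ Hc1) => // [[Nxv Exv]].
  have Exvx := F1 _ _ Nxv Nx Exv Ex (etrans (mulrAC x v x) (etrans (congr1 (fun t => t * v) Hx) (mul0r _))).
  have : x * v = 0.
    apply: (proj1 (Exvx v)); rewrite /ann -mulrA Hv mulr0 //.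
  by case: Nxv.
have L2 : forall a x, nz_zero_divisor a -> ~ ann_equiv a c ->
    nz_zero_divisor x -> ~ ann_equiv x c -> x * x = 0 -> S (a * x).
  move=> a x Na Ea Nx Ex Hx.
  have Hc1 : c * (a * x) = 0 by rewrite mulrA F0' // mul0r.
  case: (Pcases _ Hc1) => // [[Nax Eax]].
  have K : forall r, nz_zero_divisor r -> ~ ann_equiv r c -> r * r = 0 -> ann_equiv r (a * x).
    move=> r Nr Er Hr; apply: (F1 _ _ Nr Nax Er Eax).
    rewrite mulrCA mulrC; apply: (L1 r x Nr Er Hr Nx Ex Hx a).
    exact: F0'.
  by exfalso; apply: Er12; exact: eqv_trans (K r1 Nr1 Er1 Hr1) (eqv_sym (K r2 Nr2 Er2 Hr2)).
have L3 : forall a b, nz_zero_divisor a -> ~ ann_equiv a c ->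
    nz_zero_divisor b -> ~ ann_equiv b c -> S (a * b).
  move=> a b Na Ea Nb Eb.
  have Hc1 : c * (a * b) = 0 by rewrite mulrA F0' // mul0r.
  case: (Pcases _ Hc1) => // [[Nab Eab]].
  have K : forall r, nz_zero_divisor r -> ~ ann_equiv r c -> r * r = 0 -> ann_equiv r (a * b).
    move=> r Nr Er Hr; apply: (F1 _ _ Nr Nab Er Eab).
    rewrite mulrA (mulrC r a); apply: (L2 a r Na Ea Nr Er Hr b).
    exact: F0'.
  by exfalso; apply: Er12; exact: eqv_trans (K r1 Nr1 Er1 Hr1) (eqv_sym (K r2 Nr2 Er2 Hr2)).
have ProdS : forall u v, c * u = 0 -> c * v = 0 -> S (u * v).
  move=> u v Hu Hv.
  case: (Pcases u Hu) => [Su|[Nu Eu]].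
    by move=> z Hz; rewrite -mulrA; apply: Su; rewrite mulrA Hv mul0r.
  case: (Pcases v Hv) => [Sv|[Nv Ev]].
    by move=> z Hz; rewrite -mulrA Sv // mulr0.
  exact: L3.
have Triple : forall a b d, c * a = 0 -> c * b = 0 -> c * d = 0 -> a * (b * d) = 0.
  by move=> a b d Ha Hb Hd; rewrite mulrC; apply: ProdS.

have Pideal := ann_ideal c.
have Two : c * 2%:R = 0.
  apply: NNPP => H2.
  have nz2 : forall v : R, v <> 0 -> 2%:R * v <> 0.
    move=> v Hv H; apply: H2; apply: (StepC v Hv); by rewrite mulrC.
  have H12 : r1 * r2 <> 0.
    by move=> H; apply: Er12; apply: (F1 _ _ Nr1 Nr2 Er1 Er2 H).
  have cr1 : c * r1 = 0 by apply: F0'.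
  have cr2 : c * r2 = 0 by apply: F0'.
  pose u := r1 + r2.
  pose w := r1 - r2.
  have cu : c * u = 0 by rewrite /u mulrDr cr1 cr2 addr0.
  have cw : c * w = 0 by rewrite /w mulrBr cr1 cr2 subr0.
  have uu : u * u = 2%:R * (r1 * r2).
    have -> : u * u = r1 * r1 + 2%:R * (r1 * r2) + r2 * r2 by rewrite /u; ring.
    by rewrite Hr1 Hr2 add0r addr0.
  have ww : w * w = - (2%:R * (r1 * r2)).
    have -> : w * w = r1 * r1 - 2%:R * (r1 * r2) + r2 * r2 by rewrite /w; ring.
    by rewrite Hr1 Hr2 add0r addr0.
  have ur1 : u * r1 = r1 * r2.
    by rewrite /u mulrDl Hr1 add0r mulrC.
  have wr1 : w * r1 = - (r1 * r2).
    by rewrite /w mulrBl Hr1 sub0r mulrC.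
  have Luw : forall t, c * t = 0 -> t * r1 <> 0 -> nz_zero_divisor t /\ ~ ann_equiv t c.
    move=> t Ht Htr; case: (Pcases t Ht) => // St.
    by exfalso; apply: Htr; apply: St.
  have [Nu Eu] : nz_zero_divisor u /\ ~ ann_equiv u c.
    by apply: Luw => //; rewrite ur1.
  have [Nw Ew] : nz_zero_divisor w /\ ~ ann_equiv w c.
    apply: Luw => //; rewrite wr1 => H; apply: H12.
    by rewrite -[r1 * r2]opprK H oppr0.
  have Huu : u * u <> 0 by rewrite uu; exact: nz2 _ H12.
  have Hww : w * w <> 0.
    rewrite ww => H; apply: (nz2 _ H12).
    by rewrite -[LHS]opprK H oppr0.
  have Euw := Spec2 u w Nu Eu Huu Nw Ew Hww.
  have uw0 : u * w = 0.
    have -> : u * w = r1 * r1 - r2 * r2 by rewrite /u /w; ring.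
    by rewrite Hr1 Hr2 subr0.
  by apply: Hww; apply: (proj1 (Euw w)).
have H8 : (8%:R : R) = 0.
  have -> : (8%:R : R) = 2%:R * (2%:R * 2%:R) by rewrite -!natrM.
  exact: (Triple _ _ _ Two Two Two).
have H1 : (1 : R) <> 0 by move=> H; apply: Hc0; rewrite -(mulr1 c) H mulr0.
exists (ann c); split.
- split.
    split; last by exists c.
    by split => //; rewrite /ann mulr1.
  move=> q [[[Hq0 Hqadd Hqmul] Hq1 Hqpr] [y Hy]].
  have Hy0 : y <> 0.
    by move=> Hy0; apply: Hq1; apply/(Hy 1); rewrite /ann Hy0 mul0r.
  have Hypr : forall a b, y * (a * b) = 0 -> y * a = 0 \/ y * b = 0.
    move=> a b Hab; have : q (a * b) by apply/(Hy _).
    by case/Hqpr => H; [left|right]; apply/(Hy _).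
  have Ny : nz_zero_divisor y.
    split => //.
    have : y * (a0 * c) = 0 by rewrite F0 // mulr0.
    case/Hypr => H; [exists a0; split=> //; by case: Na0 | by exists c].
  case: (classic (ann_equiv y c)) => E.
    by move=> z; have := Hy z; have := E z; rewrite /ann; tauto.
  by exfalso; apply: (StepA y Ny E Hypr).
- move=> z; split.
    move=> [s [Hs ->]]; rewrite big_seq; apply: big1 => ab Hab.
    have [Ha [t [Ht ->]]] := Hs ab Hab.
    rewrite mulr_sumr big_seq; apply: big1 => cd Hcd.
    have [Hc1 Hc2] := Ht cd Hcd.
    by apply: Triple.
  rewrite /zero_ideal => ->; exists [::]; split; last by rewrite big_nil.
  by move=> ab; rewrite in_nil.
- exact: char_of_8.
Qed.
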